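(* Let $P$ be a finite poset with a partition $P=P^*\sqcup C\sqcup O$ into marked, chain and order elements, where $\min(P)\subseteq P^*$. Let $\mathcal{I}=(I_0,\dots,I_{k-1})\in\mathfrak{I}(P^* )$ and $\lambda,\mu\in\mathcal{L}(P^*,\mathcal{I})$. Then \[\mathcal{O}_{C,O}(P,\lambda+\mu)=\mathcal{O}_{C,O}(P,\lambda)+\mathcal{O}_{C,O}(P,\mu).\] Furthermore, if $\lambda$ and $\mu$ are both integral, then \[\mathcal{O}^{\mathbb{Z}}_{C,O}(P,\lambda+\mu)=\mathcal{O}^{\mathbb{Z}}_{C,O}(P,\lambda)+\mathcal{O}^{\mathbb{Z}}_{C,O}(P,\mu).\]
   Context: $p\prec q$ denotes a covering relation in $P$. For an order-preserving $\lambda\colon P^*\to\mathbb{R}$, the marked chain-order polyhedron $\mathcal{O}_{C,O}(P,\lambda)\subseteq\mathbb{R}^P$ is the set of all $\mathbf{x}=(x_p)_{p\in P}$ with: (1) $x_a=\lambda(a)$ for $a\in P^*$; (2) $x_p\ge 0$ for $p\in C$; (3) $x_{p_1}+\cdots+x_{p_r}\le x_b-x_a$ for every saturated chain $a\prec p_1\prec\cdots\prec p_r\prec b$ in $P$ with $a,b\in P^*\sqcup O$, all $p_i\in C$, $r\ge0$. $\mathcal{O}^{\mathbb{Z}}_{C,O}(P,\lambda)=\mathcal{O}_{C,O}(P,\lambda)\cap\mathbb{Z}^P$; Minkowski sums are denoted by $+$. $\mathfrak{I}(P^* )$ is the set of chains $\varnothing\ne I_0\subsetneq I_1\subsetneq\cdots\subsetneq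 I_{k-1}\ne P^*$ of order ideals of the poset $P^*$ (with $k\ge 1$; the empty chain with $k=1$... i.e. any such chain, possibly of length zero); set $I_{-1}=\varnothing$, $I_k=P^*$. For $\mathcal{I}\in\mathfrak{I}(P^* )$, $\mathcal{L}(P^*,\mathcal{I})$ is the set of order-preserving maps $f\colon P^*\to\mathbb{R}$ that are constant on each $I_j\setminus I_{j-1}$ ($j=0,\dots,k$) and satisfy $f(I_0\setminus I_{-1})\le f(I_1\setminus I_0)\le\cdots\le f(I_k\setminus I_{k-1})$. A marking is integral if it takes values in $\mathbb{Z}$. *)

(* Defs.v *)
From HB Require Import structures.
From mathcomp Require Import all_boot all_order all_algebra.
From mathcomp Require Import reals.
Set Implicit Arguments. Unset Strict Implicit. Unset Printing Implicit Defensive.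
Import Order.TTheory GRing.Theory Num.Theory.
Local Open Scope ring_scope.

Section Defs.
Variables (d : Order.disp_t) (T : finPOrderType d) (R : realType).

Definition covers (p q : T) : bool :=
  (p < q)%O && [forall c : T, ~~ ((p < c)%O && (c < q)%O)].

Definition is_minimal (p : T) : bool := [forall q : T, ~~ (q < p)%O].

Definition marked_partition (Pstar C O : {set T}) : Prop :=
  [/\ [disjoint Pstar & C], [disjoint Pstar & O], [disjoint C & O],
      Pstar :|: C :|: O = [set: T] &
      (forall p : T, is_minimal p -> p \in Pstar)].

Definition MCO (Pstar C O : {set T}) (lam : T -> R) (x : T -> R) : Prop :=
  [/\ (forall a, a \in Pstar -> x a = lam a),
      (forall p, p \in C -> 0 <= x p) &
      (forall (a b : T) (ps : seq T),
          a \in Pstar :|: O -> b \in Pstar :|: O ->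
          all (fun p => p \in C) ps ->
          path covers a (rcons ps b) ->
          \sum_(p <- ps) x p <= x b - x a)].

Definition integral_pt (x : T -> R) : Prop := forall p, x p \is a Num.int.

Definition MCOZ (Pstar C O : {set T}) (lam : T -> R) (x : T -> R) : Prop :=
  MCO Pstar C O lam x /\ integral_pt x.

Definition msum (A B : (T -> R) -> Prop) (x : T -> R) : Prop :=
  exists y z, [/\ A y, B z & x = (fun p => y p + z p)].

Definition ideal_in (Pstar I : {set T}) : bool :=
  (I \subset Pstar) &&
  [forall p : T, forall q : T,
     ((p \in Pstar) && (q \in I) && (p <= q)%O) ==> (p \in I)].

Definition ideal_chain (Pstar : {set T}) (Is : seq {set T}) : Prop :=
  [/\ sorted (fun A B : {set T} => A \proper B) Is,
      all (ideal_in Pstar) Is,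
      set0 \notin Is & Pstar \notin Is].

(* Iext Is j = I_{j-1}, for j = 0..k+1 (I_{-1} = ∅, I_k = Pstar) *)
Definition Iext (Pstar : {set T}) (Is : seq {set T}) (j : nat) : {set T} :=
  nth Pstar (set0 :: Is) j.

(* block j = I_j \ I_{j-1}, j = 0..k *)
Definition block (Pstar : {set T}) (Is : seq {set T}) (j : nat) : {set T} :=
  Iext Pstar Is j.+1 :\: Iext Pstar Is j.

Definition order_pres_on (Pstar : {set T}) (f : T -> R) : Prop :=
  forall p q, p \in Pstar -> q \in Pstar -> (p <= q)%O -> f p <= f q.

Definition in_L (Pstar : {set T}) (Is : seq {set T}) (f : T -> R) : Prop :=
  [/\ order_pres_on Pstar f,
      (forall j p q, (j <= size Is)%N ->
          p \in block Pstar Is j -> q \in block Pstar Is j -> f p = f q) &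
      (forall j p q, (j < size Is)%N ->
          p \in block Pstar Is j -> q \in block Pstar Is j.+1 -> f p <= f q)].

End Defs.

(* Main.v *)
Require Import Defs.
From HB Require Import structures.
From mathcomp Require Import all_boot all_order all_algebra.
From mathcomp Require Import reals.
From mathcomp Require classical_sets boolp.
From mathcomp Require Import lra.
Import Order.TTheory GRing.Theory Num.Theory.
Local Open Scope ring_scope.
Set Implicit Arguments. Unset Strict Implicit. Unset Printing Implicit Defensive.
Notation cov := (@covers _ _).
Lemma mp_C_notD d (T : finPOrderType d) (Pstar C O : {set T}) p :
  marked_partition Pstar C O -> p \in C -> p \notin Pstar :|: O.
Proof.
case=> dPC dPO dCO _ _ pC; rewrite in_setU negb_or.
by rewrite (disjointFl dPC pC) (disjointFr dCO pC).
Qed.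

Lemma mp_DorC d (T : finPOrderType d) (Pstar C O : {set T}) p :
  marked_partition Pstar C O -> p \notin C -> p \in Pstar :|: O.
Proof.
case=> _ _ _ cov _ pC; have : p \in [set: T] by rewrite in_setT.
by rewrite -cov !in_setU (negbTE pC) orbF.
Qed.

Lemma covers_lt d (T : finPOrderType d) (p q : T) : cov p q -> (p < q)%O.
Proof. by case/andP. Qed.

Lemma lt_card_lt d (T : finPOrderType d) (q c : T) :
  (q < c)%O -> (#|[set r | (r < q)%O]| < #|[set r | (r < c)%O]|)%N.
Proof.
move=> qc; apply: proper_card; apply/properP; split.
  by apply/subsetP => r; rewrite !inE => rq; apply: lt_trans rq qc.
by exists q; rewrite inE ?ltxx.
Qed.

Lemma cover_pred d (T : finPOrderType d) (p : T) : ~~ is_minimal p ->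
  exists q, cov q p /\ (#|[set r | (r < q)%O]| < #|[set r | (r < p)%O]|)%N.
Proof.
rewrite /is_minimal negb_forall => /existsP [q0]; rewrite negbK => q0p.
case: (@arg_maxnP _ q0 (fun q => (q < p)%O) (fun q => #|[set r | (r < q)%O]|) q0p) => q qp qmax.
exists q. split. 2: by apply: lt_card_lt.
apply/andP; split => //; apply/forallP => c; apply/negP => /andP [qc cp].
by have /= := qmax c cp; rewrite leqNgt (lt_card_lt qc).
Qed.

Lemma chain_exists d (T : finPOrderType d) (Pstar C O : {set T}) :
  marked_partition Pstar C O -> forall p, p \in C ->
  exists a qs, [/\ a \in Pstar :|: O, all (fun q => q \in C) qs &
                   path cov a (rcons qs p)].
Proof.
move=> hmp p.
move: {2}#|[set q | (q < p)%O]| (leqnn #|[set q | (q < p)%O]|) => n.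
elim: n p => [|n IH] p hn pC;
  (have nm : ~~ is_minimal p by
    apply/negP => /(match hmp with And5 _ _ _ _ h => h end) pP;
    have := mp_C_notD hmp pC; rewrite in_setU pP);
  have [q [qp hq]] := cover_pred nm;
  case: (boolP (q \in C)) => qC;
  try (exists q, [::]; split; [exact: mp_DorC hmp qC | by [] | by rewrite /= qp andbT]).
  by move: (leq_trans hq hn); rewrite ltn0.
have hq' : (#|[set r | (r < q)%O]| <= n)%N by rewrite -ltnS (leq_trans hq hn).
have [a [qs [aD qsC pth]]] := IH q hq' qC.
exists a, (rcons qs q); split => //.
  by rewrite all_rcons qC.
by rewrite rcons_path pth last_rcons.
Qed.

Definition Vset d (T : finPOrderType d) (R : realType) (D C : {set T})
  (x : T -> R) (p : T) : classical_sets.set R :=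
  fun v => exists a qs, [/\ a \in D, all (fun q => q \in C) qs,
             path cov a (rcons qs p) & v = x a + \sum_(q <- qs) x q].

Definition uu d (T : finPOrderType d) (R : realType) (D C : {set T})
  (x : T -> R) (p : T) : R := sup (Vset D C x p).

Lemma sum_uniq_le d (T : finPOrderType d) (R : realType) (x : T -> R) (s : seq T) :
  uniq s -> \sum_(q <- s) x q <= \sum_t `|x t|.
Proof.
move=> us; apply: (@le_trans _ _ (\sum_(q <- s) `|x q|)).
  by apply: ler_sum => i _; exact: ler_norm.
rewrite big_uniq // big_mkcond /=; apply: ler_sum => t _.
by case: ifP => _ //; exact: normr_ge0.
Qed.

Lemma path_uniq d (T : finPOrderType d) (a p : T) qs :
  path cov a (rcons qs p) -> uniq (a :: rcons qs p).
Proof.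
move=> pth; apply: (@sorted_uniq _ (fun u v : T => (u < v)%O)).
- by move=> u v w; apply: lt_trans.
- by move=> u; rewrite ltxx.
by rewrite /=; apply: sub_path pth => u v /covers_lt.
Qed.

Lemma V_ub d (T : finPOrderType d) (R : realType) (D C : {set T}) (x : T -> R) p :
  classical_sets.has_ubound (Vset D C x p).
Proof.
exists (\sum_t `|x t| + \sum_t `|x t|) => v [a [qs [aD qsC pth ->]]].
have := path_uniq pth; rewrite /= mem_rcons in_cons negb_or rcons_uniq.
case/andP => /andP [_ aqs] /andP [_ uqs].
apply: lerD; last exact: sum_uniq_le.
by have := @sum_uniq_le d T R x [:: a] isT; rewrite big_seq1.
Qed.

Lemma sup_int_attained (R : realType) (E : classical_sets.set R) :
  (exists v, E v) -> classical_sets.has_ubound E ->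
  (forall v, E v -> v \is a Num.int) -> E (sup E).
Proof.
move=> [v0 Ev0] ubE Eint.
have hs : classical_sets.has_sup E by split => //; exists v0.
have [e Ee he] := sup_adherent ltr01 hs.
have eub : e <= sup E by apply: sup_upper_bound.
case: (eqVneq e (sup E)) => [<- //|ne].
have lt : 0 < sup E - e by rewrite subr_gt0 lt_neqAle ne eub.
have [e' Ee' he'] := sup_adherent lt hs.
have e'ub : e' <= sup E by apply: sup_upper_bound.
have hint : e' - e \is a Num.int by rewrite rpredB ?Eint.
have pos : 0 < e' - e by rewrite subr_gt0; move: he'; rewrite opprB addrC subrK.
have := norm_intr_ge1 hint (lt0r_neq0 pos); rewrite gtr0_norm // => h1.
exfalso; move: he; lra.
Qed.

Definition chain_ok d (T : finPOrderType d) (R : realType) (Pstar C O : {set T})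
  (x : T -> R) : Prop :=
  forall (a b : T) (ps : seq T),
    a \in Pstar :|: O -> b \in Pstar :|: O ->
    all (fun p => p \in C) ps ->
    path cov a (rcons ps b) ->
    \sum_(p <- ps) x p <= x b - x a.

Definition hi d (T : finPOrderType d) (R : realType) (Pstar C O : {set T})
  (x : T -> R) (p : T) : R :=
  if p \in C then uu (Pstar :|: O) C x p + x p else x p.

Lemma sum_rcons d (T : finPOrderType d) (R : realType) (x : T -> R) qs s :
  \sum_(q <- rcons qs s) x q = \sum_(q <- qs) x q + x s.
Proof. by rewrite -cats1 big_cat big_seq1. Qed.

Lemma V_nonempty d (T : finPOrderType d) (R : realType) (Pstar C O : {set T})
  (x : T -> R) p : marked_partition Pstar C O -> p \in C ->
  exists v, Vset (Pstar :|: O) C x p v.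
Proof.
move=> hmp pC; have [a [qs [aD qsC pth]]] := chain_exists hmp pC.
by exists (x a + \sum_(q <- qs) x q), a, qs.
Qed.

Lemma V_ext d (T : finPOrderType d) (R : realType) (D C : {set T})
  (x : T -> R) s q v : s \in C -> cov s q -> Vset D C x s v -> Vset D C x q (v + x s).
Proof.
move=> sC sq [a [qs [aD qsC pth ->]]].
exists a, (rcons qs s); split => //.
- by rewrite all_rcons sC.
- by rewrite rcons_path pth last_rcons.
by rewrite -cats1 big_cat big_seq1 addrA.
Qed.

Lemma propA d (T : finPOrderType d) (R : realType) (Pstar C O : {set T})
  (x : T -> R) s q : marked_partition Pstar C O -> q \in C -> cov s q ->
  hi Pstar C O x s <= uu (Pstar :|: O) C x q.
Proof.
move=> hmp qC sq; rewrite /hi; case: ifP => sC.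
  rewrite -lerBrDr; apply: ge_sup; first exact: V_nonempty.
  move=> v Vv; rewrite lerBrDr; apply: (ub_le_sup (V_ub _ _ _ _)).
  exact: V_ext.
apply: (ub_le_sup (V_ub _ _ _ _)).
exists s, [::]; split => //.
- by apply: mp_DorC hmp _; rewrite sC.
- by rewrite /= sq.
by rewrite big_nil addr0.
Qed.

Lemma propB d (T : finPOrderType d) (R : realType) (Pstar C O : {set T})
  (x : T -> R) s b : marked_partition Pstar C O -> chain_ok Pstar C O x ->
  b \in Pstar :|: O -> cov s b -> hi Pstar C O x s <= x b.
Proof.
move=> hmp hx bD sb; rewrite /hi; case: ifP => sC.
  rewrite -lerBrDr; apply: ge_sup; first exact: V_nonempty.
  move=> v [a [qs [aD qsC pth ->]]].
  have := hx a b (rcons qs s) aD bD.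
  rewrite all_rcons sC qsC rcons_path pth last_rcons sb sum_rcons.
  by move=> /(_ isT isT); lra.
have := hx s b [::] (mp_DorC hmp (negbT sC)) bD isT.
by rewrite /= sb big_nil subr_ge0 => ->.
Qed.

Lemma uu_int d (T : finPOrderType d) (R : realType) (Pstar C O : {set T})
  (x : T -> R) p : marked_partition Pstar C O -> p \in C -> integral_pt x ->
  uu (Pstar :|: O) C x p \is a Num.int.
Proof.
move=> hmp pC xi; rewrite /uu.
have [|a [qs [_ _ _ ->]]] := @sup_int_attained R (Vset (Pstar :|: O) C x p)
  (V_nonempty x hmp pC) (V_ub _ _ _ _).
  by move=> v [a [qs [_ _ _ ->]]]; rewrite rpredD ?rpred_sum.
by rewrite rpredD ?rpred_sum.
Qed.

Definition Yg d (T : finPOrderType d) (R : realType) (Pstar C O : {set T})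
  (x : T -> R) (g : R -> R) (p : T) : R :=
  if p \in C then g (hi Pstar C O x p) - g (uu (Pstar :|: O) C x p) else g (x p).

Lemma Y_chain d (T : finPOrderType d) (R : realType) (Pstar C O : {set T})
  (x : T -> R) (g : R -> R) : marked_partition Pstar C O ->
  (forall s t, s <= t -> g s <= g t) ->
  forall qs s, all (fun q => q \in C) qs -> path cov s qs ->
  \sum_(q <- qs) Yg Pstar C O x g q <=
    g (hi Pstar C O x (last s qs)) - g (hi Pstar C O x s).
Proof.
move=> hmp gm; elim=> [|q qs IH] s /=.
  by rewrite big_nil subrr.
case/andP => qC qsC /andP [sq pth].
rewrite big_cons; have := IH q qsC pth.
have := gm _ _ (propA x hmp qC sq).
rewrite /Yg qC; lra.
Qed.

Lemma Y_MCO d (T : finPOrderType d) (R : realType) (Pstar C O : {set T})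
  (x : T -> R) (g : R -> R) (target : T -> R) : marked_partition Pstar C O ->
  (forall s t, s <= t -> g s <= g t) ->
  chain_ok Pstar C O x -> (forall p, p \in C -> 0 <= x p) ->
  (forall a, a \in Pstar -> g (x a) = target a) ->
  MCO Pstar C O target (Yg Pstar C O x g).
Proof.
move=> hmp gm hx xpos htg; split.
- move=> a aP; rewrite /Yg ifF ?htg //.
  by apply: negbTE; apply: contraTN aP => aC; have := mp_C_notD hmp aC;
     rewrite in_setU negb_or => /andP [].
- move=> p pC; rewrite /Yg pC subr_ge0; apply: gm; rewrite /hi pC.
  by rewrite lerDl xpos.
move=> a b ps aD bD psC.
rewrite rcons_path => /andP [pth lb].
have := @Y_chain _ _ _ Pstar C O x g hmp gm _ _ psC pth.
have := gm _ _ (propB hmp hx bD lb).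
have naC : (a \in C) = false by apply: negbTE; apply: contraTN aD => aC; exact: mp_C_notD hmp aC.
have nbC : (b \in C) = false by apply: negbTE; apply: contraTN bD => bC; exact: mp_C_notD hmp bC.
rewrite /Yg naC nbC /hi naC; lra.
Qed.

Lemma block_nonempty d (T : finPOrderType d) (Pstar : {set T}) (Is : seq {set T}) j :
  ideal_chain Pstar Is -> (j < size Is)%N -> exists r, r \in block Pstar Is j.
Proof.
case=> srt _ n0 _ hj.
suff : Iext Pstar Is j \proper Iext Pstar Is j.+1.
  by case/properP => _ [r r1 r2]; exists r; rewrite /block inE r1 r2.
rewrite /Iext /=; case: j hj => [|i] hi /=.
  rewrite proper0; apply: contraNneq n0 => <-; exact: mem_nth.
by apply: (sortedP Pstar srt).
Qed.

Lemma in_some_block d (T : finPOrderType d) (Pstar : {set T}) (Is : seq {set T}) a :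
  a \in Pstar -> exists2 j, (j <= size Is)%N & a \in block Pstar Is j.
Proof.
move=> aP.
suff H : forall m, a \in Iext Pstar Is m -> exists2 j, (j < m)%N & a \in block Pstar Is j.
  have [|j hj ab] := H (size Is).+1; last by exists j.
  by rewrite /Iext nth_default.
elim=> [|m IH]; first by rewrite /Iext /= inE.
move=> am; case: (boolP (a \in Iext Pstar Is m)) => h.
  by have [j hj ab] := IH h; exists j => //; apply: ltnW.
by exists m => //; rewrite /block inE h am.
Qed.

Lemma block_mono d (T : finPOrderType d) (R : realType) (Pstar : {set T})
  (Is : seq {set T}) (f : T -> R) :
  ideal_chain Pstar Is -> in_L Pstar Is f ->
  forall i j p q, (i <= j)%N -> (j <= size Is)%N ->
  p \in block Pstar Is i -> q \in block Pstar Is j -> f p <= f q.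
Proof.
move=> hic [_ hsame hstep] i j; elim: j => [|j IH] p q hij hj pb qb.
  by move: hij; rewrite leqn0 => /eqP ij; subst i; rewrite (hsame 0%N p q).
move: hij; rewrite leq_eqVlt => /orP [/eqP ij | hlt].
  by subst i; rewrite (hsame j.+1 p q).
have [r rb] := block_nonempty hic hj.
apply: (@le_trans _ _ (f r)); first by apply: IH => //; apply: ltnW hj.
exact: (hstep j r q hj rb qb).
Qed.

Lemma comono d (T : finPOrderType d) (R : realType) (Pstar : {set T})
  (Is : seq {set T}) (lam mu : T -> R) :
  ideal_chain Pstar Is -> in_L Pstar Is lam -> in_L Pstar Is mu ->
  forall a b, a \in Pstar -> b \in Pstar ->
  (lam a <= lam b /\ mu a <= mu b) \/ (lam b <= lam a /\ mu b <= mu a).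
Proof.
move=> hic hl hm a b aP bP.
have [i hi ai] := in_some_block Is aP.
have [j hj bj] := in_some_block Is bP.
case: (leqP i j) => hij.
  by left; split; apply: (block_mono hic _ hij hj ai bj).
by right; split; apply: (block_mono hic _ (ltnW hij) hi bj ai).
Qed.

Lemma fold_max d (T : finPOrderType d) (R : realType) (F : T -> R) (d0 : T) (s : seq T) :
  (F d0 <= foldr (fun a m => Num.max (F a) m) (F d0) s) /\
  (forall a, a \in s -> F a <= foldr (fun a m => Num.max (F a) m) (F d0) s) /\
  exists b, (b = d0 \/ b \in s) /\ foldr (fun a m => Num.max (F a) m) (F d0) s = F b.
Proof.
elim: s => [|c s [IH1 [IH2 [b [hb IH3]]]]] /=.
  by split => //; split => //; exists d0; split => //; left.
split; first by rewrite le_max IH1 orbT.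
split.
  move=> a; rewrite in_cons => /orP [/eqP ->|ins]; first by rewrite le_max lexx.
  by rewrite le_max IH2 ?orbT.
rewrite maxEle; case: ifP => _.
  exists b; split => //; case: hb => [->|hb]; [by left | by right; rewrite in_cons hb orbT].
by exists c; split => //; right; rewrite in_cons eqxx.
Qed.

Lemma min0_cases (R : realType) (u : R) :
  (Num.min 0 u = 0 /\ 0 <= u) \/ (Num.min 0 u = u /\ u < 0).
Proof. by rewrite minEle; case: leP => h; [left | right]. Qed.

Lemma psi_exists d (T : finPOrderType d) (R : realType) (Pstar : {set T})
  (Is : seq {set T}) (lam mu : T -> R) :
  ideal_chain Pstar Is -> in_L Pstar Is lam -> in_L Pstar Is mu ->
  exists psi : R -> R,
  [/\ forall s t, s <= t -> psi s <= psi t,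
      forall s t, s <= t -> s - psi s <= t - psi t,
      forall a, a \in Pstar -> psi (lam a + mu a) = mu a &
      (forall a, a \in Pstar -> lam a \is a Num.int) ->
      (forall a, a \in Pstar -> mu a \is a Num.int) ->
      forall t, t \is a Num.int -> psi t \is a Num.int].
Proof.
move=> hic hl hm.
case: (set_0Vmem Pstar) => [P0|[a0 a0P]].
  exists (fun _ => 0); split => //.
  - by move=> s t st; lra.
  - by move=> a; rewrite P0 inE.
pose f a t := mu a + Num.min 0 (t - (lam a + mu a)).
have fmono : forall a s t, s <= t -> f a s <= f a t.
  move=> a s t st; rewrite /f.
  by case: (min0_cases (s - (lam a + mu a))) => [[-> ?]|[-> ?]];
     case: (min0_cases (t - (lam a + mu a))) => [[-> ?]|[-> ?]]; lra.
have flip : forall a s t, s <= t -> s - f a s <= t - f a t.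
  move=> a s t st; rewrite /f.
  by case: (min0_cases (s - (lam a + mu a))) => [[-> ?]|[-> ?]];
     case: (min0_cases (t - (lam a + mu a))) => [[-> ?]|[-> ?]]; lra.
pose psi t := foldr (fun a m => Num.max (f a t) m) (f a0 t) (enum Pstar).
have ub : forall a t, a \in Pstar -> f a t <= psi t.
  move=> a t aP; have [h1 [h2 _]] := fold_max (fun a => f a t) a0 (enum Pstar).
  by apply: h2; rewrite mem_enum.
have att : forall t, exists2 b, b \in Pstar & psi t = f b t.
  move=> t; have [_ [_ [b [hb e]]]] := fold_max (fun a => f a t) a0 (enum Pstar).
  exists b => //; case: hb => [->|]; by rewrite ?mem_enum.
exists psi; split.
- move=> s t st; have [b bP ->] := att s.
  exact: le_trans (fmono b s t st) (ub b t bP).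
- move=> s t st; have [b bP ->] := att t.
  have := flip b s t st; have := ub b s bP; lra.
- move=> a aP; apply/eqP; rewrite eq_le; apply/andP; split; last first.
    by have := ub a (lam a + mu a) aP; rewrite /f subrr minxx addr0.
  have [b bP ->] := att (lam a + mu a); rewrite /f.
  case: (comono hic hl hm bP aP) => [[h1 h2]|[h1 h2]];
  case: (min0_cases (lam a + mu a - (lam b + mu b))) => [[-> ?]|[-> ?]]; lra.
- move=> li mi t ti; have [b bP ->] := att t; rewrite /f.
  case: (min0_cases (t - (lam b + mu b))) => [[-> _]|[-> _]].
    by rewrite addr0 mi.
  by rewrite rpredD ?rpredB ?rpredD ?li ?mi.
Qed.

Lemma decomp d (T : finPOrderType d) (R : realType) (Pstar C O : {set T})
  (lam mu : T -> R) (psi : R -> R) (x : T -> R) :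
  marked_partition Pstar C O ->
  (forall s t, s <= t -> psi s <= psi t) ->
  (forall s t, s <= t -> s - psi s <= t - psi t) ->
  (forall a, a \in Pstar -> psi (lam a + mu a) = mu a) ->
  MCO Pstar C O (fun a => lam a + mu a) x ->
  exists y z, [/\ MCO Pstar C O lam y, MCO Pstar C O mu z,
     x = (fun p => y p + z p) &
     integral_pt x -> (forall t, t \is a Num.int -> psi t \is a Num.int) ->
     integral_pt y /\ integral_pt z].
Proof.
move=> hmp P1 P2 P3 [hxP hxC hx3].
exists (Yg Pstar C O x (fun t => t - psi t)), (Yg Pstar C O x psi); split.
- apply: Y_MCO => //.
  by move=> a aP; rewrite hxP // P3 // addrK.
- apply: Y_MCO => //.
  by move=> a aP; rewrite hxP // P3.
- apply: boolp.funext => p; rewrite /Yg /hi; case: (p \in C); lra.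
move=> xi psii; split => p; rewrite /Yg; case: ifP => pC.
- by rewrite /hi pC !rpredB ?psii ?rpredD ?(uu_int hmp pC xi) ?xi.
- by rewrite rpredB ?psii ?xi.
- by rewrite /hi pC !rpredB ?psii ?rpredD ?(uu_int hmp pC xi) ?xi.
- by rewrite psii ?xi.
Qed.

Lemma msum_sub d (T : finPOrderType d) (R : realType) (Pstar C O : {set T})
  (lam mu : T -> R) (y z : T -> R) :
  MCO Pstar C O lam y -> MCO Pstar C O mu z ->
  MCO Pstar C O (fun a => lam a + mu a) (fun p => y p + z p).
Proof.
move=> [hyP hyC hy3] [hzP hzC hz3]; split.
- by move=> a aP; rewrite hyP ?hzP.
- by move=> p pC; rewrite addr_ge0 ?hyC ?hzC.
move=> a b ps aD bD psC pth; rewrite big_split /=.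
have := hy3 a b ps aD bD psC pth; have := hz3 a b ps aD bD psC pth; lra.
Qed.

Unset Implicit Arguments.
Set Strict Implicit.

Theorem theorem2p10 (d : Order.disp_t) (T : finPOrderType d) (R : realType)
    (Pstar C O : {set T}) (Is : seq {set T}) (lam mu : T -> R) :
  marked_partition Pstar C O ->
  ideal_chain Pstar Is ->
  in_L Pstar Is lam -> in_L Pstar Is mu ->
  (forall x : T -> R,
     MCO Pstar C O (fun a => lam a + mu a) x <->
     msum (MCO Pstar C O lam) (MCO Pstar C O mu) x) /\
  ((forall a, a \in Pstar -> lam a \is a Num.int) ->
   (forall a, a \in Pstar -> mu a \is a Num.int) ->
   forall x : T -> R,
     MCOZ Pstar C O (fun a => lam a + mu a) x <->
     msum (MCOZ Pstar C O lam) (MCOZ Pstar C O mu) x).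
Proof.
move=> hmp hic hl hm.
have [psi [P1 P2 P3 P4]] := psi_exists hic hl hm.
split.
  move=> x; split.
    move=> hx; have [y [z [hy hz -> _]]] := decomp hmp P1 P2 P3 hx.
    by exists y, z.
  by move=> [y [z [hy hz ->]]]; apply: msum_sub.
move=> li mi x; split.
  move=> [hx xi]; have [y [z [hy hz e hi']]] := decomp hmp P1 P2 P3 hx.
  have [yi zi] := hi' xi (P4 li mi).
  by exists y, z; split.
move=> [y [z [[hy yi] [hz zi] ->]]]; split; first exact: msum_sub.
by move=> p; rewrite rpredD ?yi ?zi.
Qed.
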